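(* Let $\beta$ be a basis set of monomials in $x_1,\dots,x_r$, let $c^{\mathbf d}_{\mathbf j}$ be an arbitrary arrow for $\beta$, and let $\mathbf x^{\mathbf b}$ be a minimal generator of $I_\beta$ with $\mathbf x^{\mathbf b}\mid\mathbf x^{\mathbf d}$. Then either $c^{\mathbf d}_{\mathbf j}\sim0$ or $c^{\mathbf d}_{\mathbf j}\sim c^{\mathbf b}_{\mathbf j_1}$ for some $\mathbf x^{\mathbf j_1}\in\beta$.
   Context: Monomials are identified with exponent vectors in $\mathbb Z_{\ge0}^r$. A basis set is a finite nonempty set $\beta$ of monomials closed under taking divisors; $I_\beta$ is the ideal generated by monomials not in $\beta$. An arrow $c^{\mathbf d}_{\mathbf j}$ for $\beta$ is a pair $(\mathbf d,\mathbf j)$ with tail $\mathbf x^{\mathbf d}\notin\beta$ and head $\mathbf x^{\mathbf j}\in\beta$. A translation step replaces $(\mathbf d,\mathbf j)$ by $(\mathbf d\pm e_i,\mathbf j\pm e_i)$ provided the result is again an arrow (nonnegative exponents, head in $\beta$, tail not in $\beta$); $\sim$ is the equivalence relation generated by steps. $c\sim0$ means $c$ is translation-equivalent to an arrow $(\mathbf d',\mathbf j')$ with, for some $i$, $j'_i=0$, $d'_i\ge1$ and $\mathbf x^{\mathbf d'-e_i}\notin\beta$. *)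

(* Defs.v *)
From mathcomp Require Import all_boot.
From Stdlib Require Import Relation_Operators.
Set Implicit Arguments. Unset Strict Implicit. Unset Printing Implicit Defensive.

(* Monomials in x_1..x_r are exponent vectors in Z_{>=0}^r. *)
Definition mono (r : nat) := {ffun 'I_r -> nat}.

Definition unitv r (i : 'I_r) : mono r := [ffun k => nat_of_bool (k == i)].
Definition addm r (a b : mono r) : mono r := [ffun k => a k + b k].

Definition mdivides r (a b : mono r) : Prop := forall k, a k <= b k.

Definition basis_set r (beta : seq (mono r)) : Prop :=
  beta != [::] /\
  forall m m' : mono r, m \in beta -> mdivides m' m -> m' \in beta.

(* Monomial membership in I_beta = ideal generated by the monomials not in beta. *)
Definition in_Ibeta r (beta : seq (mono r)) (m : mono r) : Prop :=
  exists g : mono r, g \notin beta /\ mdivides g m.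

Definition min_gen r (beta : seq (mono r)) (b : mono r) : Prop :=
  in_Ibeta beta b /\
  forall m : mono r, mdivides m b -> m <> b -> ~ in_Ibeta beta m.

(* Arrow (d, j): tail x^d not in beta, head x^j in beta. *)
Definition is_arrow r (beta : seq (mono r)) (c : mono r * mono r) : Prop :=
  c.1 \notin beta /\ c.2 \in beta.

Definition tstep r (beta : seq (mono r)) (c c' : mono r * mono r) : Prop :=
  is_arrow beta c /\ is_arrow beta c' /\
  exists i : 'I_r,
    (c'.1 = addm c.1 (unitv i) /\ c'.2 = addm c.2 (unitv i)) \/
    (c.1 = addm c'.1 (unitv i) /\ c.2 = addm c'.2 (unitv i)).

Definition tequiv r (beta : seq (mono r)) : mono r * mono r -> mono r * mono r -> Prop :=
  clos_refl_sym_trans _ (tstep beta).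

Definition equiv_zero r (beta : seq (mono r)) (c : mono r * mono r) : Prop :=
  exists (d' j' : mono r) (i : 'I_r),
    is_arrow beta (d', j') /\ tequiv beta c (d', j') /\
    j' i = 0 /\ 1 <= d' i /\
    (forall m : mono r, d' = addm m (unitv i) -> m \notin beta).

(* Main.v *)
Require Import Defs.
From mathcomp Require Import all_boot.
From Stdlib Require Import Relation_Operators.
Set Implicit Arguments. Unset Strict Implicit.

Definition subu r (a : mono r) (i : 'I_r) : mono r := [ffun k : 'I_r => a k - nat_of_bool (k == i)].

Lemma subuK r (a : mono r) i : 0 < a i -> a = addm (subu a i) (unitv i).
Proof.
move=> Hi; apply/ffunP=> k; rewrite !ffunE.
case: (eqVneq k i) => [->|_] /=; last by rewrite subn0 addn0.
by rewrite subnK.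
Qed.

Lemma sum_addu r (a : mono r) i : \sum_k addm a (unitv i) k = (\sum_k a k).+1.
Proof.
rewrite (eq_bigr (fun k => a k + (k == i))); last by move=> k _; rewrite !ffunE.
rewrite big_split /= -addn1; congr (_ + _).
rewrite (bigD1 i) //= eqxx big1 ?addn0 // => k /negbTE -> //.
Qed.

Lemma subu_div r (a : mono r) i : mdivides (subu a i) a.
Proof. by move=> k; rewrite ffunE leq_subr. Qed.

Theorem lemma4p2 (r : nat) (beta : seq (mono r)) (d j b : mono r) :
  basis_set beta ->
  is_arrow beta (d, j) ->
  min_gen beta b ->
  mdivides b d ->
  equiv_zero beta (d, j) \/
  exists j1 : mono r, j1 \in beta /\ tequiv beta (d, j) (b, j1).
Proof.
move=> [_ Hcl] Harr [[g [Hg Hgb]] _].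
have Hb : forall m, mdivides b m -> m \notin beta.
  move=> m Hm; apply/negP=> Hmb; move/negP: Hg; apply.
  apply: (Hcl m) => // k; exact: leq_trans (Hgb k) (Hm k).
have Hn0 := leqnn (\sum_k d k).+1.
move: {2}(\sum_k d k).+1 Hn0 => n.
elim: n d j Harr => [|n IH] d j Harr Hn Hbd; first by [].
case: (boolP [exists i, b i < d i]) => [/existsP [i Hi]|Hno]; last first.
  right; exists j; split; first by case: Harr.
  have -> : d = b.
    apply/ffunP=> k; apply/eqP; rewrite eqn_leq Hbd andbT.
    move/existsPn: Hno => /(_ k); by rewrite -leqNgt.
  exact: rst_refl.
have Hdi : 0 < d i by apply: leq_ltn_trans Hi.
have Hsub : mdivides b (subu d i).
  move=> k; rewrite ffunE; case: (eqVneq k i) => [->|_] /=.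
    by rewrite subn1 -ltnS prednK.
  by rewrite subn0.
case: (posnP (j i)) => Hji.
  left; exists d, j, i; split => //; split; first exact: rst_refl.
  split => //; split => // m Hm.
  apply: Hb; move=> k; move: (Hsub k); rewrite Hm !ffunE.
  by rewrite addnK.
have Harr' : is_arrow beta (subu d i, subu j i).
  split; first exact: Hb.
  by apply: (Hcl j); [case: Harr | exact: subu_div].
have Hst : tstep beta (d, j) (subu d i, subu j i).
  split => //; split => //; exists i; right; split; exact: subuK.
have Hn' : (\sum_k subu d i k).+1 <= n.
  move: Hn; by rewrite {1}(subuK Hdi) sum_addu.
case: (IH _ _ Harr' Hn' Hsub) => [[d' [j' [i' [H1 [H2 H3]]]]]|[j1 [Hj1 H]]].
  left; exists d', j', i'; split => //; split => //.
  eapply rst_trans; [apply rst_step; exact Hst | exact H2].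
right; exists j1; split => //.
eapply rst_trans; [apply rst_step; exact Hst | exact H].
Qed.
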